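(* Let $u\in\varphi^{-1}(0)$ and let $\alpha^1,\alpha^2\in\Delta_k$ be two solutions of $(\mathrm{P}_u)$ with $\alpha^1\neq\alpha^2$. Then $\omega_u(\alpha)=0$ for all $\alpha\in\mathrm{span}\{\alpha^1,\alpha^2\}$, and $\mathrm{span}\{\alpha^1,\alpha^2\}\cap\ker(DJ^r(u)^\top)$ contains a nonzero vector.
   Context: $J^r:\mathbb{R}^n\to\mathbb{R}^k$ is continuously differentiable with Jacobian $DJ^r(u)\in\mathbb{R}^{k\times n}$ (so $\ker(DJ^r(u)^\top)\subseteq\mathbb{R}^k$), and $\epsilon\in[0,\infty)^k$. $\Delta_k:=\{\alpha\in[0,\infty)^k:\sum_{i=1}^k\alpha_i=1\}$. For $u\in\mathbb{R}^n$ and $\alpha\in\mathbb{R}^k$, $\omega_u(\alpha):=\alpha^\top\big(DJ^r(u)DJ^r(u)^\top-\epsilon\epsilon^\top\big)\alpha=\|DJ^r(u)^\top\alpha\|_2^2-(\alpha^\top\epsilon)^2$; $(\mathrm{P}_u)$ denotes the problem $\min_{\alpha\in\Delta_k}\omega_u(\alpha)$, a solution being a minimizer; $\varphi(u):=\min_{\alpha\in\Delta_k}\omega_u(\alpha)$. *)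

(* Defs.v *)
(* the statement is purely algebraic at a fixed point u,
   stated over an arbitrary real field R (covers the reals). *)
From HB Require Import structures.
From mathcomp Require Import all_boot all_order all_algebra.
Set Implicit Arguments. Unset Strict Implicit. Unset Printing Implicit Defensive.
Import Order.TTheory GRing.Theory Num.Theory.
Local Open Scope ring_scope.

Definition simplex (R : realFieldType) (k : nat) : pred 'cV[R]_k :=
  [pred a : 'cV[R]_k | [forall i : 'I_k, 0 <= a i ord0] && (\sum_(i < k) a i ord0 == 1)].

Definition omega (R : realFieldType) (k n : nat)
    (DJ : 'cV[R]_n -> 'M[R]_(k, n)) (eps : 'cV[R]_k) (u : 'cV[R]_n)
    (a : 'cV[R]_k) : R :=
  (a^T *m (DJ u *m (DJ u)^T - eps *m eps^T) *m a) ord0 ord0.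

Definition is_solution (R : realFieldType) (k n : nat)
    (DJ : 'cV[R]_n -> 'M[R]_(k, n)) (eps : 'cV[R]_k) (u : 'cV[R]_n)
    (a : 'cV[R]_k) : Prop :=
  a \in @simplex R k /\
  forall b, b \in @simplex R k -> omega DJ eps u a <= omega DJ eps u b.

Definition varphi_is (R : realFieldType) (k n : nat)
    (DJ : 'cV[R]_n -> 'M[R]_(k, n)) (eps : 'cV[R]_k) (u : 'cV[R]_n)
    (v : R) : Prop :=
  (exists2 a, a \in @simplex R k & omega DJ eps u a = v) /\
  forall b, b \in @simplex R k -> v <= omega DJ eps u b.

(* Main.v *)
Require Import Defs.
From HB Require Import structures.
From mathcomp Require Import all_boot all_order all_algebra.
From mathcomp Require Import ring lra.
Import Order.TTheory GRing.Theory Num.Theory.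
Local Open Scope ring_scope.

Lemma omegaE (R : realFieldType) (k n : nat) (DJ : 'cV[R]_n -> 'M[R]_(k, n))
    (eps : 'cV[R]_k) (u : 'cV[R]_n) (a : 'cV[R]_k) :
  omega DJ eps u a = \sum_j ((DJ u)^T *m a) j ord0 ^+ 2
                     - (\sum_i eps i ord0 * a i ord0) ^+ 2.
Proof.
rewrite /omega mulmxBr mulmxBl.
have -> : a^T *m (DJ u *m (DJ u)^T) *m a = ((DJ u)^T *m a)^T *m ((DJ u)^T *m a).
  by rewrite trmx_mul trmxK !mulmxA.
have -> : a^T *m (eps *m eps^T) *m a = (a^T *m eps) *m (eps^T *m a) by rewrite !mulmxA.
rewrite !mxE big_ord1; congr (_ - _).
  by apply: eq_bigr => j _; rewrite !mxE expr2.
rewrite !mxE expr2; congr (_ * _).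
  by apply: eq_bigr => i _; rewrite !mxE mulrC.
by apply: eq_bigr => i _; rewrite !mxE.
Qed.

Lemma MaE (R : realFieldType) (k n : nat) (M : 'M[R]_(k, n)) (a1 a2 : 'cV[R]_k)
  (c1 c2 : R) j :
  (M^T *m (c1 *: a1 + c2 *: a2)) j ord0 =
  c1 * (M^T *m a1) j ord0 + c2 * (M^T *m a2) j ord0.
Proof. by rewrite mulmxDr -!scalemxAr !mxE. Qed.

Lemma sumlin (R : realFieldType) (k : nat) (f : 'I_k -> R) (a1 a2 : 'cV[R]_k)
  (c1 c2 : R) :
  \sum_i f i * (c1 *: a1 + c2 *: a2) i ord0 =
  c1 * (\sum_i f i * a1 i ord0) + c2 * (\sum_i f i * a2 i ord0).
Proof.
rewrite !mulr_sumr -big_split; apply: eq_bigr => i _; rewrite !mxE /=; ring.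
Qed.

Lemma sqlin (R : realFieldType) (n : nat) (x y : 'I_n -> R) (c1 c2 : R) :
  \sum_j (c1 * x j + c2 * y j) ^+ 2 =
  c1 ^+ 2 * (\sum_j x j ^+ 2) + 2 * c1 * c2 * (\sum_j x j * y j)
  + c2 ^+ 2 * (\sum_j y j ^+ 2).
Proof.
rewrite !mulr_sumr -!big_split; apply: eq_bigr => i _ /=; ring.
Qed.

Lemma sq0 (R : realFieldType) (n : nat) (x : 'I_n -> R) :
  \sum_j x j ^+ 2 = 0 -> forall j, x j = 0.
Proof.
move=> h j; apply/eqP; rewrite -sqrf_eq0; apply/eqP.
by apply: (psumr_eq0P _ h) => // i _; rewrite sqr_ge0.
Qed.

Lemma omega_lin (R : realFieldType) (k n : nat) (DJ : 'cV[R]_n -> 'M[R]_(k, n))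
    (eps : 'cV[R]_k) (u : 'cV[R]_n) (a1 a2 : 'cV[R]_k) (c1 c2 : R) :
  let x1 := fun j => ((DJ u)^T *m a1) j ord0 in
  let x2 := fun j => ((DJ u)^T *m a2) j ord0 in
  let s1 := \sum_i eps i ord0 * a1 i ord0 in
  let s2 := \sum_i eps i ord0 * a2 i ord0 in
  omega DJ eps u (c1 *: a1 + c2 *: a2) =
  c1 ^+ 2 * (\sum_j x1 j ^+ 2 - s1 ^+ 2)
  + 2 * c1 * c2 * (\sum_j x1 j * x2 j - s1 * s2)
  + c2 ^+ 2 * (\sum_j x2 j ^+ 2 - s2 ^+ 2).
Proof.
move=> x1 x2 s1 s2; rewrite omegaE sumlin.
under eq_bigr => j _ do rewrite MaE.
rewrite sqlin -/s1 -/s2; rewrite /x1 /x2; ring.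
Qed.

Lemma simplex_sum (R : realFieldType) (k : nat) (a1 a2 : 'cV[R]_k) (c1 c2 : R) :
  a1 \in @simplex R k -> a2 \in @simplex R k ->
  \sum_i (c1 *: a1 + c2 *: a2) i ord0 = c1 + c2.
Proof.
move=> /andP[_ /eqP h1] /andP[_ /eqP h2].
have := @sumlin R k (fun _ => 1) a1 a2 c1 c2.
under eq_bigr => i _ do rewrite mul1r.
under [X in _ = c1 * X + _]eq_bigr => i _ do rewrite mul1r.
under [X in _ = _ + c2 * X]eq_bigr => i _ do rewrite mul1r.
by rewrite h1 h2 !mulr1.
Qed.

Arguments simplex_sum {R k a1 a2} c1 c2.
Arguments sq0 {R n x}.

Lemma simplex_s_ge0 (R : realFieldType) (k : nat) (eps a : 'cV[R]_k) :
  (forall i, 0 <= eps i ord0) -> a \in @simplex R k ->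
  0 <= \sum_i eps i ord0 * a i ord0.
Proof.
move=> he /andP[/forallP hp _]; apply: sumr_ge0 => i _; exact: mulr_ge0.
Qed.

Theorem mainTheorem6 (R : realFieldType) (k n : nat)
    (DJ : 'cV[R]_n -> 'M[R]_(k, n))
    (eps : 'cV[R]_k) (heps : forall i, 0 <= eps i ord0)
    (u : 'cV[R]_n) (a1 a2 : 'cV[R]_k) :
  varphi_is DJ eps u 0 ->
  is_solution DJ eps u a1 -> is_solution DJ eps u a2 -> a1 != a2 ->
  (forall c1 c2 : R, omega DJ eps u (c1 *: a1 + c2 *: a2) = 0) /\
  (exists c1 c2 : R, c1 *: a1 + c2 *: a2 != 0 /\
                     (DJ u)^T *m (c1 *: a1 + c2 *: a2) = 0).
Proof.
move=> [[a0 ha0 q0] hmin] [hs1 hm1] [hs2 hm2] hne.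
set x1 := fun j => ((DJ u)^T *m a1) j ord0.
set x2 := fun j => ((DJ u)^T *m a2) j ord0.
set s1 := \sum_i eps i ord0 * a1 i ord0.
set s2 := \sum_i eps i ord0 * a2 i ord0.
set S11 := \sum_j x1 j ^+ 2.
set S22 := \sum_j x2 j ^+ 2.
set P := \sum_j x1 j * x2 j.
have Q1 : S11 - s1 ^+ 2 = 0.
  have e : omega DJ eps u a1 = S11 - s1 ^+ 2 by rewrite omegaE.
  rewrite -e; apply/eqP; rewrite eq_le hmin // andbT -q0; exact: hm1.
have Q2 : S22 - s2 ^+ 2 = 0.
  have e : omega DJ eps u a2 = S22 - s2 ^+ 2 by rewrite omegaE.
  rewrite -e; apply/eqP; rewrite eq_le hmin // andbT -q0; exact: hm2.
have s1ge : 0 <= s1 by exact: simplex_s_ge0.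
have s2ge : 0 <= s2 by exact: simplex_s_ge0.
have Bge : 0 <= P - s1 * s2.
  set c : R := 2^-1.
  have cpos : 0 < c by rewrite /c invr_gt0 ltr0n.
  have hmid : c *: a1 + c *: a2 \in @simplex R k.
    apply/andP; split.
      apply/forallP => i; rewrite !mxE.
      move: hs1 hs2 => /andP[/forallP p1 _] /andP[/forallP p2 _].
      by rewrite addr_ge0 // mulr_ge0 // ltW.
    rewrite (simplex_sum _ _ hs1 hs2) /c. by apply/eqP; lra.
  have := hmin _ hmid; rewrite omega_lin -/x1 -/x2 -/s1 -/s2 -/S11 -/S22 -/P Q1 Q2.
  rewrite !mulr0 addr0 add0r => h.
  have c2 : 0 < 2 * c * c by rewrite !mulr_gt0 // ltr0n.
  by rewrite -(pmulr_rge0 _ c2).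
have N : \sum_j (s2 * x1 j + (- s1) * x2 j) ^+ 2 = - 2 * s1 * s2 * (P - s1 * s2).
  rewrite sqlin -/S11 -/S22 -/P.
  have -> : S11 = s1 ^+ 2 by lra.
  have -> : S22 = s2 ^+ 2 by lra.
  ring.
have Nge : 0 <= \sum_j (s2 * x1 j + (- s1) * x2 j) ^+ 2.
  by apply: sumr_ge0 => j _; rewrite sqr_ge0.
have s1pos_case : 0 < s1 -> 0 < s2 -> P - s1 * s2 = 0.
  move=> p1 p2; apply/eqP; rewrite eq_le Bge andbT.
  have p12 : 0 < 2 * s1 * s2 by rewrite !mulr_gt0 // ltr0n.
  rewrite -(pmulr_rle0 _ p12); move: Nge; rewrite N; lra.
have zero_case1 : s1 = 0 -> forall j, x1 j = 0.
  move=> h; apply: sq0; rewrite -/S11; move: Q1; rewrite h; lra.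
have zero_case2 : s2 = 0 -> forall j, x2 j = 0.
  move=> h; apply: sq0; rewrite -/S22; move: Q2; rewrite h; lra.
have B0 : P - s1 * s2 = 0.
  have [h1|p1] := eqVneq s1 0.
    rewrite h1 mul0r subr0 /P big1 // => j _; by rewrite zero_case1 // mul0r.
  have [h2|p2] := eqVneq s2 0.
    rewrite h2 mulr0 subr0 /P big1 // => j _; by rewrite zero_case2 // mulr0.
  by apply: s1pos_case; rewrite lt_def ?p1 ?p2.
split.
  move=> c1 c2; rewrite omega_lin -/x1 -/x2 -/s1 -/s2 -/S11 -/S22 -/P Q1 Q2 B0.
  by rewrite !mulr0 !addr0.
have nz : forall c1 c2, c1 + c2 != 0 -> c1 *: a1 + c2 *: a2 != 0.
  move=> c1 c2 h; apply/eqP => hv; move: h; rewrite -(simplex_sum c1 c2 hs1 hs2) hv.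
  by rewrite big1 ?eqxx // => i _; rewrite mxE.
have [h1|p1] := eqVneq s1 0.
  exists 1, 0; split; first by apply: nz; rewrite addr0 oner_eq0.
  apply/matrixP => j i; rewrite ord1 MaE [RHS]mxE.
  by have := zero_case1 h1 j; rewrite /x1 => ->; rewrite mulr0 mul0r addr0.
have [h2|p2] := eqVneq s2 0.
  exists 0, 1; split; first by apply: nz; rewrite add0r oner_eq0.
  apply/matrixP => j i; rewrite ord1 MaE [RHS]mxE.
  by have := zero_case2 h2 j; rewrite /x2 => ->; rewrite mulr0 mul0r add0r.
exists s2, (- s1); split.
  apply/eqP => hv; move/eqP: hne; apply.
  have hs : s2 = s1.
    have := simplex_sum s2 (- s1) hs1 hs2; rewrite hv.
    rewrite big1 => [h|i _]; last by rewrite mxE.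
    by apply/eqP; rewrite -subr_eq0 -h.
  apply/matrixP => i j; have := congr1 (fun m : 'M[R]_(k,1) => m i j) hv; rewrite !mxE hs.
  move=> h; apply: (mulfI p1); apply/eqP; rewrite -subr_eq0 -h mulNr.
  by [].
have NZ : \sum_j (s2 * x1 j + (- s1) * x2 j) ^+ 2 = 0.
  rewrite N B0; ring.
apply/matrixP => j i; rewrite ord1 MaE [RHS]mxE; exact: (sq0 NZ j).
Qed.
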